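(* Suppose that $d(p_{r+1}^2) \le 2p_r$ for every $r \ge 1$. Then Legendre's conjecture holds: for every natural number $n \ge 1$ there is a prime strictly between $n^2$ and $(n+1)^2$.
   Context: $p_k$ denotes the $k$-th prime ($p_1=2$, $p_2=3$, \dots). For $r \ge 1$, $d(p_{r+1}^2)$ denotes the maximum of $q'-q$ over all pairs of consecutive primes $q<q'$ with $p_{r+1} \le q < q' \le p_{r+1}^2$ (equivalently, the maximum gap between consecutive integers coprime to $p_r\# = \prod_{i\le r} p_i$ lying in the interval $[p_{r+1}, p_{r+1}^2]$). *)

(* Defs.v *)
From mathcomp Require Import all_boot.
Set Implicit Arguments. Unset Strict Implicit. Unset Printing Implicit Defensive.

(* [kth_prime k p] : p is the k-th prime p_k (1-indexed: p_1 = 2),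
   i.e. p is prime and exactly k-1 primes are smaller than p. *)
Definition kth_prime (k p : nat) : Prop :=
  prime p /\ count prime (iota 0 p) = k.-1.

Definition consec_primes (q q' : nat) : bool :=
  [&& prime q, prime q', q < q' & ~~ has prime (iota q.+1 (q' - q.+1))].

(* maxgap L U = max of q' - q over consecutive primes q < q' with L <= q < q' <= U
   (0 if there is no such pair). *)
Definition maxgap (L U : nat) : nat :=
  \max_(q < U.+1) \max_(q' < U.+1 | (L <= q) && consec_primes q q') (q' - q).

(* d(p_{r+1}^2) as in the paper, where p = p_{r+1}. *)
Definition d_sq (p : nat) : nat := maxgap p (p ^ 2).

(* Main.v *)
Require Import Defs.
From mathcomp Require Import all_boot zify.
Set Implicit Arguments. Unset Strict Implicit.

Lemma count_le t K : \sum_(1 <= k < K.+1) (k <= t : nat) <= minn K t.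
Proof.
elim: K => [|K IH]; first by rewrite big_geq.
rewrite big_nat_recr //=.
case: (leqP K.+1 t) => h; lia.
Qed.



Lemma sum_le (d : nat -> nat) t K : (forall k, d k <= 1) -> (forall k, t < k -> d k = 0) ->
  \sum_(1 <= k < K.+1) d k <= t.
Proof.
move=> h1 h0.
apply: leq_trans (geq_minr K t).
apply: leq_trans (count_le t K).
apply: leq_sum => k _.
case: (leqP k t) => h /=; first exact: h1.
by rewrite h0.
Qed.
Lemma div2_le m d : 0 < d -> (m %/ d).*2 <= m.*2 %/ d <= (m %/ d).*2 + 1.
Proof.
move=> d0.
have e := divn_eq m d; have r := ltn_pmod m d0.
set x := m %/ d in e *; set y := m %% d in e r.
apply/andP; split.
  by rewrite leq_divRL //; lia.
rewrite -ltnS ltn_divLR //; lia.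
Qed.

Lemma lognC p m : prime p ->
  logn p 'C(m.*2, m) = \sum_(1 <= k < (m.*2).+1) (m.*2 %/ p ^ k - (m %/ p ^ k).*2).
Proof.
move=> pp.
have hm : m <= m.*2 by rewrite -addnn leq_addr.
have hb := bin_fact hm.
have e2 : m.*2 - m = m by rewrite -addnn addnK.
rewrite e2 in hb.
have hC : 0 < 'C(m.*2, m) by rewrite bin_gt0.
have := congr1 (logn p) hb.
rewrite lognM ?muln_gt0 ?fact_gt0 // lognM ?fact_gt0 // !logn_fact //.
have ext : \sum_(1 <= k < m.+1) m %/ p ^ k = \sum_(1 <= k < (m.*2).+1) m %/ p ^ k.
  rewrite [in RHS](big_cat_nat _ (n:=m.+1)) //=.
  idtac.
  rewrite [X in _ = _ + X]big1_seq ?addn0 // => k /andP[_].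
  rewrite mem_iota => /andP[hk _]; apply: divn_small.
  apply: leq_trans hk _; apply: ltnW; apply: ltn_expl; exact: prime_gt1.
rewrite ext => h.
have split : \sum_(1 <= k < (m.*2).+1) m.*2 %/ p ^ k =
   \sum_(1 <= k < (m.*2).+1) (m.*2 %/ p ^ k - (m %/ p ^ k).*2) +
   \sum_(1 <= k < (m.*2).+1) (m %/ p ^ k).*2.
  rewrite -big_split /=; apply: eq_bigr => k _; rewrite subnK //.
  have hp : 0 < p ^ k by rewrite expn_gt0 prime_gt0.
  by case/andP: (div2_le m hp).
rewrite split in h.
have d2 : \sum_(1 <= k < (m.*2).+1) (m %/ p ^ k).*2 = (\sum_(1 <= k < (m.*2).+1) m %/ p ^ k).*2.
  by rewrite (big_morph double doubleD (erefl (0.*2))).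
rewrite d2 in h; lia.
Qed.

Lemma dterm_le1 p m k : prime p -> m.*2 %/ p ^ k - (m %/ p ^ k).*2 <= 1.
Proof.
move=> pp; have hp : 0 < p ^ k by rewrite expn_gt0 prime_gt0.
case/andP: (div2_le m hp) => _ h; lia.
Qed.

Lemma dterm_0 p m k : m.*2 < p ^ k -> m.*2 %/ p ^ k - (m %/ p ^ k).*2 = 0.
Proof. by move=> h; rewrite divn_small. Qed.

Lemma pval p m : prime p -> 0 < m -> p ^ logn p 'C(m.*2, m) <= m.*2.
Proof.
move=> pp m0; have p1 := prime_gt1 pp.
apply: leq_trans (trunc_logP p1 _); last by rewrite double_gt0.
rewrite leq_exp2l // lognC //.
apply: sum_le => k; first exact: dterm_le1.
move=> hk; apply: dterm_0; apply: leq_trans (trunc_log_ltn _ p1) _.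
by rewrite leq_exp2l.
Qed.

Lemma pval_big p m : prime p -> m.*2 < p -> logn p 'C(m.*2, m) = 0.
Proof.
move=> pp hp; have p1 := prime_gt1 pp.
apply/eqP; rewrite -leqn0 lognC //.
apply: (@sum_le _ 0) => k; first exact: dterm_le1.
move=> hk; apply: dterm_0; apply: leq_trans hp _.
by rewrite -{1}(expn1 p) leq_exp2l.
Qed.

Lemma prod_if K Q N : 0 < N -> \prod_(0 <= p < K) (if p < Q then N else 1) <= N ^ minn K Q.
Proof.
move=> N0; elim: K => [|K IH]; first by rewrite big_geq // expn_gt0 N0.
rewrite big_nat_recr //=.
case: (ltnP K Q) => h.
  have -> : minn K.+1 Q = (minn K Q).+1 by lia.
  by rewrite expnSr leq_mul2r IH orbT.
have -> : minn K.+1 Q = minn K Q by lia.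
by rewrite muln1.
Qed.

Lemma C_bound m q : 0 < m ->
  (forall p, prime p -> q < p -> m.*2 < p) -> 'C(m.*2, m) <= (m.*2) ^ q.+1.
Proof.
move=> m0 hq.
have C0 : 0 < 'C(m.*2, m) by rewrite bin_gt0 -addnn leq_addr.
have N0 : 0 < m.*2 by rewrite double_gt0.
rewrite -{1}(partnT C0) /partn.
apply: leq_trans (_ : \prod_(0 <= p < ('C(m.*2, m)).+1) (if p < q.+1 then m.*2 else 1) <= _); last first.
  apply: leq_trans (prod_if _ _ N0) _; apply: leq_pexp2l => //; exact: geq_minr.
rewrite big_mkcond /=; apply: leq_prod => p _.
case: (boolP (prime p)) => pp; last first.
  by rewrite /logn (negbTE pp) expn0; case: ifP.
case: ifP => h.
  exact: pval.
by rewrite pval_big // hq // ltnNge -ltnS h.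
Qed.
Lemma fact4 m : 4 ^ m * (m`! * m`!) <= (m.*2).+1 * (m.*2)`!.
Proof.
elim: m => [|m IH] //.
rewrite doubleS !factS expnS.
set X := 4 ^ m; set F := m`!; set G := (m.*2)`!.
move: IH; rewrite -/X -/F -/G => IH.
have: X * (F * F) * (4 * (m.+1 * m.+1)) <= (m.*2).+1 * G * (4 * (m.+1 * m.+1)) by rewrite leq_mul2r IH orbT.
nia.
Qed.

Lemma pow2_lin e : 4 <= e -> 2 * e + 5 <= 2 ^ e.
Proof.
elim: e => // e IH; rewrite leq_eqVlt => /orP[/eqP <- //|h].
rewrite expnS; have := IH h; lia.
Qed.

Lemma bert_big q : 11 <= q ->
  (forall p, prime p -> q < p -> q ^ 2 < p) -> False.
Proof.
move=> q11 hq.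
set m := (q ^ 2)./2.
have hN : (q ^ 2) - 1 <= m.*2 <= q ^ 2.
  have := odd_double_half (q ^ 2); rewrite -/m; case: (odd _) => /= h; lia.
have m0 : 0 < m.
  have : 121 <= q ^ 2 by rewrite expnS expn1; nia.
  lia.
have hq' : forall p, prime p -> q < p -> m.*2 < p.
  move=> p pp qp; have := hq p pp qp; lia.
have h1 : 4 ^ m <= (m.*2).+1 * 'C(m.*2, m).
  have hm : m <= m.*2 by rewrite -addnn leq_addr.
  have hb := bin_fact hm.
  have e2 : m.*2 - m = m by rewrite -addnn addnK.
  rewrite e2 in hb.
  have f0 : 0 < m`! * m`! by rewrite muln_gt0 fact_gt0.
  rewrite -(leq_pmul2r f0) -mulnA hb; exact: fact4.
have h2 := C_bound m0 hq'.
set e := trunc_log 2 q.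
have he1 : q < 2 ^ e.+1 := trunc_log_ltn _ (isT : 1 < 2).
have he2 : 2 ^ e <= q := trunc_logP (isT : 1 < 2) (leq_trans (isT : 0 < 11) q11).
have he3 : 2 * e + 5 <= q.
  case: (leqP 4 e) => h; first by apply: leq_trans (pow2_lin h) he2.
  lia.
have h3 : (m.*2).+1 * (m.*2) ^ q.+1 <= q ^ (2 * q + 5).
  have a : (m.*2) ^ q.+1 <= (q ^ 2) ^ q.+1 by rewrite leq_exp2r //; lia.
  have b : (m.*2).+1 <= q ^ 3.
    have : q ^ 2 + 1 <= q ^ 3 by rewrite !expnS expn0; nia.
    lia.
  have -> : 2 * q + 5 = 3 + 2 * q.+1 by lia.
  by rewrite expnD expnM; apply: leq_mul.
have h4 : q ^ (2 * q + 5) < 2 ^ (e.+1 * (2 * q + 5)).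
  rewrite expnM ltn_exp2r //; lia.
have h5 : 2 ^ (e.+1 * (2 * q + 5)) <= 2 ^ (q ^ 2 - 1).
  rewrite leq_exp2l //.
  have : 2 * e + 5 <= q := he3.
  have : q * q = q ^ 2 by rewrite expnS expn1.
  nia.
have h6 : 2 ^ (q ^ 2 - 1) <= 4 ^ m.
  rewrite (_ : 4 = 2 ^ 2) // -expnM leq_exp2l //; lia.
have : (m.*2).+1 * 'C(m.*2, m) <= (m.*2).+1 * (m.*2) ^ q.+1 by rewrite leq_mul2l h2 orbT.
lia.
Qed.

Lemma bert q : prime q -> exists p, [/\ prime p, q < p & p <= q ^ 2].
Proof.
move=> pq.
have qq : q <= q ^ 2 by rewrite expnS expn1 leq_pmull // prime_gt0.
case: (boolP (has prime (iota q.+1 (q ^ 2 - q)))).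
  case/hasP => p; rewrite mem_iota => /andP[h1 h2] pp.
  by exists p; split => //; lia.
move=> H; exfalso.
case: (leqP 11 q) => q11.
  apply: (bert_big q11) => p pp qp; rewrite ltnNge; apply/negP => hp.
  move/hasPn: H => /(_ p); rewrite mem_iota pp /= => H.
  apply: notF; apply: H; apply/andP; split => //; lia.
move: pq H; clear qq.
by case: q q11 => [|[|[|[|[|[|[|[|[|[|[|q]]]]]]]]]]].
Qed.

Lemma minP (P : pred nat) : (exists n, P n) -> exists m, P m /\ forall k, P k -> m <= k.
Proof. by move=> ex; case: (ex_minnP ex) => m Pm mmin; exists m. Qed.

Lemma maxP (P : pred nat) x B : P x -> (forall k, P k -> k <= B) ->
  exists m, P m /\ forall k, P k -> k <= m.
Proof.
move=> Px hB; have ex : exists n, P n by exists x.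
by case: (ex_maxnP ex hB) => m Pm mmax; exists m.
Qed.

Lemma no_prime_iota a l : (forall k, a <= k < a + l -> ~~ prime k) -> ~~ has prime (iota a l).
Proof. by move=> h; apply/hasPn => k; rewrite mem_iota; apply: h. Qed.

Lemma count_step a b : a < b -> prime a -> (forall k, a < k < b -> ~~ prime k) ->
  count prime (iota 0 b) = (count prime (iota 0 a)).+1.
Proof.
move=> ab pa h.
have -> : b = a + (b - a.+1).+1 by lia.
rewrite iotaD count_cat add0n /= pa.
have : ~~ has prime (iota a.+1 (b - a.+1)).
  apply: no_prime_iota => k hk; apply: h; lia.
rewrite has_count -leqNgt leqn0 => /eqP ->; lia.
Qed.

Lemma sq_not_prime n : 2 <= n -> ~~ prime (n ^ 2).
Proof.
move=> n2; apply/negP => /primeP [_ h].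
have := h n; rewrite expnS expn1 dvdn_mulr // => /(_ isT) /orP[/eqP|/eqP]; nia.
Qed.

Lemma gap_le q q' b : consec_primes q q' -> b <= q -> q' <= b ^ 2 -> q' - q <= d_sq b.
Proof.
move=> hc bq qb.
have qq : q < q' by case/and4P: hc.
have hq : q < (b ^ 2).+1 by lia.
have hq' : q' < (b ^ 2).+1 by lia.
rewrite /d_sq /maxgap.
apply: leq_trans (leq_bigmax (Ordinal hq)).
rewrite /=.
apply: (@leq_bigmax_cond _ _ _ (Ordinal hq')) => /=.
by rewrite bq hc.
Qed.

Theorem mainTheorem3 :
  (forall r pr pr1 : nat, 1 <= r -> kth_prime r pr -> kth_prime r.+1 pr1 ->
     d_sq pr1 <= 2 * pr) ->
  forall n : nat, 1 <= n ->
    exists q : nat, [/\ prime q, n ^ 2 < q & q < n.+1 ^ 2].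
Proof.
move=> H n n1.
case: (leqP n 1) => n2.
  have -> : n = 1 by lia.
  by exists 2.
have sqn : n ^ 2 = n * n by rewrite expnS expn1.
have sqn1 : n.+1 ^ 2 = n.+1 * n.+1 by rewrite expnS expn1.
have [q [/andP [pq qn] qmax]] :
    exists q, (prime q && (q <= n ^ 2)) /\ forall k, prime k && (k <= n ^ 2) -> k <= q.
  apply: (@maxP _ 2 (n ^ 2)); first by rewrite /=; nia.
  by move=> k /andP[].
have qn' : q < n ^ 2.
  rewrite ltn_neqAle qn andbT; apply/negP => /eqP e.
  by move: pq; rewrite e (negbTE (sq_not_prime n2)).
have [q' [/andP [pq' qq'] q'min]] :
    exists q', (prime q' && (q < q')) /\ forall k, prime k && (q < k) -> q' <= k.
  apply: minP; case: (bert pq) => p [pp qp _]; exists p; by rewrite pp qp.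
have q'q2 : q' <= q ^ 2.
  case: (bert pq) => p [pp qp pq2]; apply: leq_trans pq2; apply: q'min; by rewrite pp qp.
have q'n : n ^ 2 < q'.
  rewrite ltnNge; apply/negP => h.
  have := qmax q'; rewrite pq' h => /(_ isT); lia.
have hc : consec_primes q q'.
  rewrite /consec_primes pq pq' qq' /=.
  apply: no_prime_iota => k hk; apply/negP => pk.
  have := q'min k; rewrite pk /= => /(_ ltac:(lia)); lia.
have [b [/andP [pb bq'] bmin]] :
    exists b, (prime b && (q' <= b ^ 2)) /\ forall k, prime k && (q' <= k ^ 2) -> b <= k.
  by apply: minP; exists q; rewrite pq q'q2.
have bq : b <= q by apply: bmin; rewrite pq q'q2.
have b3 : 2 < b.
  rewrite ltnNge; apply/negP => h.
  have : b ^ 2 <= 4 by rewrite expnS expn1; nia.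
  lia.
have [a [/andP [pa ab] amax]] :
    exists a, (prime a && (a < b)) /\ forall k, prime k && (k < b) -> k <= a.
  apply: (@maxP _ 2 b); first by rewrite /= b3.
  by move=> k /andP[_ /ltnW].
have a2 : a ^ 2 < q'.
  rewrite ltnNge; apply/negP => h.
  have := bmin a; rewrite pa h => /(_ isT); lia.
have cnt : count prime (iota 0 b) = (count prime (iota 0 a)).+1.
  apply: count_step => // k hk; apply/negP => pk.
  have := amax k; rewrite pk /= => /(_ ltac:(lia)); lia.
have hd := H (count prime (iota 0 a)).+1 a b isT (conj pa erefl) (conj pb cnt).
have hg := gap_le hc bq bq'.
exists q'; split => //.
have aa : a * a < q' by rewrite -(expn1 a) -expnS.
have an : a <= n by nia.
nia.
Qed.
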